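(* Let $(\Omega,+)$ be a group, $a,b$ subgroups, and $x,y\subseteq\Omega$ with $x\top b$, $y\top b$, $a\top x$, $a\top y$. Then for all $z\subseteq\Omega$, $\Sigma(b,x,y,z)=T^b_{x,y}(z)$ and $\check\Sigma(a,x,y,z)=\check T^a_{x,y}(z)$. Consequently, if also $u\top b$, then $T^b_{x,x}=\mathrm{id}_\Omega$ and $T^b_{x,u}\circ T^b_{u,y}=T^b_{x,y}$; thus $\{T^b_{x,y}: x,y\in{}^\top b\}$ is a group under composition, isomorphic as a torsor to ${}^\top b=\{x: x\top b\}$ with the torsor law $\Sigma(b,\cdot,\cdot,\cdot)$.
   Context: $(\Omega,+)$ is a group written additively but not necessarily abelian; sums/differences of maps $\Omega\to\Omega$ are pointwise, in the given order, and a map applied to a subset means its image. For subsets $u,v$, $u\top v$ means every $\omega$ has a unique decomposition $\omega=\mu+\nu$ with $\mu\in u,\nu\in v$; then $P^u_v(\omega):=\nu$ and $\check P^v_u(\omega):=\mu$. Define $T^b_{x,y}:=\mathrm{id}-P^x_b+P^y_b$ (i.e. $\omega\mapsto\omega-P^x_b(\omega)+P^y_b(\omega)$) and $\check T^a_{x,y}:=\check P^y_a-\check P^x_a+\mathrm{id}$. Also $\Sigma(b,x,y,z)=\{\omega:\exists\beta,\beta'\in b:\ \omega+\beta\in x,\ \omega+\beta'+\beta\in y,\ \omega+\beta'\in z\}$ and $\check\Sigma(a,x,y,z)=\{\omega:\exists\beta,\beta'\in a:\ \beta+\omega\in x,\ \beta+\beta'+\omega\in y,\ \beta'+\omega\in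 z\}$. *)

(* Defs.v *)
From Stdlib Require Import ClassicalEpsilon.

Set Implicit Arguments.

Section Defs.
Variable G : Type.
Variables (add : G -> G -> G) (opp : G -> G) (zero : G).

Record is_group : Prop := {
  grp_assoc : forall p q r, add p (add q r) = add (add p q) r;
  grp_add0 : forall p, add p zero = p;
  grp_0add : forall p, add zero p = p;
  grp_addN : forall p, add p (opp p) = zero;
  grp_Nadd : forall p, add (opp p) p = zero }.

Record is_subgroup (a : G -> Prop) : Prop := {
  sub_zero : a zero;
  sub_add : forall p q, a p -> a q -> a (add p q);
  sub_opp : forall p, a p -> a (opp p) }.

Definition top (u v : G -> Prop) : Prop :=
  forall w, exists m n, u m /\ v n /\ w = add m n /\
    forall m' n', u m' -> v n' -> w = add m' n' -> m' = m /\ n' = n.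

(* P^u_v w := the v-component n of w = m + n (meaningful when u ⊤ v) *)
Definition P (u v : G -> Prop) (w : G) : G :=
  epsilon (inhabits zero) (fun n => exists m, u m /\ v n /\ w = add m n).

(* check P^v_u w := the u-component m of w = m + n (meaningful when u ⊤ v) *)
Definition Pc (v u : G -> Prop) (w : G) : G :=
  epsilon (inhabits zero) (fun m => exists n, u m /\ v n /\ w = add m n).

Definition T (b x y : G -> Prop) (w : G) : G :=
  add (add w (opp (P x b w))) (P y b w).

Definition Tc (a x y : G -> Prop) (w : G) : G :=
  add (add (Pc y a w) (opp (Pc x a w))) w.

Definition Sigma (b x y z : G -> Prop) (w : G) : Prop :=
  exists be be', b be /\ b be' /\ x (add w be) /\ y (add (add w be') be) /\
    z (add w be').

Definition Sigmac (a x y z : G -> Prop) (w : G) : Prop :=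
  exists be be', a be /\ a be' /\ x (add be w) /\ y (add (add be be') w) /\
    z (add be' w).

Definition image (f : G -> G) (z : G -> Prop) (w : G) : Prop :=
  exists v, z v /\ f v = w.

End Defs.

(* Main.v *)
Require Import Defs.
From Stdlib Require Import ClassicalEpsilon.
Set Implicit Arguments.

Section Aux.
Variable G : Type.
Variables (add : G -> G -> G) (opp : G -> G) (zero : G).
Hypothesis HG : is_group add opp zero.
Local Notation "p <+> q" := (add p q) (at level 50, left associativity).
Local Notation "! p" := (opp p) (at level 35, right associativity).

Lemma gA p q r : p <+> (q <+> r) = p <+> q <+> r.
Proof. apply (grp_assoc HG). Qed.
Lemma g0r p : p <+> zero = p. Proof. apply (grp_add0 HG). Qed.
Lemma g0l p : zero <+> p = p. Proof. apply (grp_0add HG). Qed.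
Lemma gNr p : p <+> ! p = zero. Proof. apply (grp_addN HG). Qed.
Lemma gNl p : ! p <+> p = zero. Proof. apply (grp_Nadd HG). Qed.
Lemma gK1 p q : p <+> (! p <+> q) = q.
Proof. now rewrite gA, gNr, g0l. Qed.
Lemma gK2 p q : ! p <+> (p <+> q) = q.
Proof. now rewrite gA, gNl, g0l. Qed.
Lemma gK3 p q : q <+> p <+> ! p = q.
Proof. now rewrite <- gA, gNr, g0r. Qed.
Lemma gK4 p q : q <+> ! p <+> p = q.
Proof. now rewrite <- gA, gNl, g0r. Qed.
Lemma gcanl p q r : p <+> q = p <+> r -> q = r.
Proof. intro H. now rewrite <- (gK2 p q), H, gK2. Qed.
Lemma gsolve_r m n w : w = m <+> n -> n = ! m <+> w.
Proof. intros ->. now rewrite gK2. Qed.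
Lemma gsolve_l m n w : w = m <+> n -> m = w <+> ! n.
Proof. intros ->. now rewrite gK3. Qed.
Lemma goppK p : ! ! p = p.
Proof. rewrite <- (g0r (! ! p)), <- (gNl p), gA, gNl, g0l. reflexivity. Qed.
Lemma gopp_add p q : ! (p <+> q) = ! q <+> ! p.
Proof. apply (@gcanl (p <+> q)). rewrite gNr, gA, gK3, gNr. reflexivity. Qed.
Lemma gopp0 : ! zero = zero.
Proof. rewrite <- (g0l (! zero)). apply gNr. Qed.

Section Sub.
Variable b : G -> Prop.
Hypothesis Hb : is_subgroup add opp zero b.
Lemma b0 : b zero. Proof. apply (sub_zero Hb). Qed.
Lemma bD p q : b p -> b q -> b (p <+> q). Proof. apply (sub_add Hb). Qed.
Lemma bN p : b p -> b (! p). Proof. apply (sub_opp Hb). Qed.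

Variable x : G -> Prop.
Hypothesis Hx : top add x b.

Lemma Pspec w : x (w <+> ! P add zero x b w) /\ b (P add zero x b w).
Proof.
  unfold P.
  destruct (epsilon_spec (inhabits zero)
     (fun n => exists m, x m /\ b n /\ w = add m n)) as [m [Hm [Hn Hw]]].
  { destruct (Hx w) as [m [n [Hm [Hn [Hw _]]]]]. exists n, m. auto. }
  split; auto. rewrite <- (gsolve_l Hw). exact Hm.
Qed.

Lemma Puniq w m n : x m -> b n -> w = m <+> n -> P add zero x b w = n.
Proof.
  intros Hm Hn Hw. destruct (Pspec w) as [H1 H2].
  destruct (Hx w) as [m0 [n0 [_ [_ [_ U]]]]].
  destruct (U _ _ Hm Hn Hw) as [_ E1].
  destruct (U _ _ H1 H2 (eq_sym (gK4 _ _))) as [_ E2]. congruence.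
Qed.

Lemma Pshift w p : b p -> P add zero x b (w <+> p) = P add zero x b w <+> p.
Proof.
  intro Hp. destruct (Pspec w) as [H1 H2].
  apply (Puniq (m := w <+> ! P add zero x b w)); auto using bD.
  now rewrite gA, gK4.
Qed.

Lemma Pin w : x w -> P add zero x b w = zero.
Proof. intro H. apply (Puniq H b0). now rewrite g0r. Qed.
End Sub.

Section SubC.
Variable a : G -> Prop.
Hypothesis Ha : is_subgroup add opp zero a.
Variable x : G -> Prop.
Hypothesis Hx : top add a x.

Lemma Pcspec w : x (! Pc add zero x a w <+> w) /\ a (Pc add zero x a w).
Proof.
  unfold Pc.
  destruct (epsilon_spec (inhabits zero)
     (fun m => exists n, a m /\ x n /\ w = add m n)) as [n [Hm [Hn Hw]]].
  { destruct (Hx w) as [m [n [Hm [Hn [Hw _]]]]]. exists m, n. auto. }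
  split; auto. rewrite <- (gsolve_r Hw). exact Hn.
Qed.

Lemma Pcuniq w m n : a m -> x n -> w = m <+> n -> Pc add zero x a w = m.
Proof.
  intros Hm Hn Hw. destruct (Pcspec w) as [H1 H2].
  destruct (Hx w) as [m0 [n0 [_ [_ [_ U]]]]].
  destruct (U _ _ Hm Hn Hw) as [E1 _].
  destruct (U _ _ H2 H1 (eq_sym (gK1 _ _))) as [E2 _]. congruence.
Qed.
End SubC.

Section Main.
Variables b : G -> Prop.
Hypothesis Hb : is_subgroup add opp zero b.
Local Notation PP x w := (P add zero x b w).
Local Notation TT x y := (T add opp zero b x y).

Lemma T_form x y v : TT x y v = v <+> (! PP x v <+> PP y v).
Proof. unfold T. now rewrite gA. Qed.

Lemma Tshift x y v p : top add x b -> top add y b -> b p ->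
  TT x y (v <+> p) = TT x y v <+> p.
Proof.
  intros Hx Hy Hp. unfold T. rewrite (Pshift Hb Hx), (Pshift Hb Hy), gopp_add by exact Hp.
  rewrite (gA (v <+> p)), gK3, gA. reflexivity.
Qed.

Lemma Sigma_T x y z w : top add x b -> top add y b ->
  (Sigma add b x y z w <-> image (TT x y) z w).
Proof.
  intros Hx Hy. split.
  - intros [be [be' [Hbe [Hbe' [H1 [H2 H3]]]]]]. exists (w <+> be'). split; auto.
    rewrite T_form.
    rewrite (Puniq Hx (m := w <+> be) (n := ! be <+> be') H1 (bD Hb _ _ (bN Hb _ Hbe) Hbe'))
      by now rewrite gA, gK3.
    rewrite (Puniq Hy (m := w <+> be' <+> be) (n := ! be) H2 (bN Hb _ Hbe))
      by now rewrite gK3.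
    rewrite gopp_add, goppK, gK3, gK3. reflexivity.
  - intros [v [Hz <-]]. destruct (Pspec Hx v) as [Hx1 Hx2].
    destruct (Pspec Hy v) as [Hy1 Hy2].
    exists (! PP y v), (! PP y v <+> PP x v).
    rewrite T_form.
    assert (E : v <+> (! PP x v <+> PP y v) <+> (! PP y v <+> PP x v) = v).
    { rewrite <- (gA v), (gA (! PP x v <+> PP y v)), gK3, gNl, g0r. reflexivity. }
    rewrite E. split; [exact (bN Hb _ Hy2)|split; [exact (bD Hb _ _ (bN Hb _ Hy2) Hx2)|]].
    split; [rewrite gA, gK3; exact Hx1|split; [|exact Hz]].
    exact Hy1.
Qed.

Lemma T_id x w : TT x x w = w.
Proof. unfold T. apply gK4. Qed.

Lemma T_comp x u y w : top add x b -> top add u b -> top add y b ->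
  TT x u (TT u y w) = TT x y w.
Proof.
  intros Hx Hu Hy. rewrite (T_form u y w). unfold T at 1.
  rewrite (Pshift Hb Hx), (Pshift Hb Hu), gK1, gopp_add.
  2,3: destruct (Pspec Hu w), (Pspec Hy w); exact (bD Hb _ _ (bN Hb _ H0) H2).
  rewrite (gA (w <+> _)), gK3. reflexivity.
Qed.

Lemma S_decomp x1 y1 z w : top add x1 b -> top add y1 b -> top add z b ->
  let v := w <+> ! PP z w in
  Sigma add b x1 y1 z (TT x1 y1 v) /\
  b (! (! PP x1 v <+> PP y1 v) <+> PP z w) /\
  w = TT x1 y1 v <+> (! (! PP x1 v <+> PP y1 v) <+> PP z w).
Proof.
  intros Hx Hy Hz v. destruct (Pspec Hz w) as [Hz1 Hz2].
  destruct (Pspec Hx v) as [_ H1]. destruct (Pspec Hy v) as [_ H2].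
  split; [|split].
  - apply (proj2 (Sigma_T _ _ Hx Hy)). exists v. split; auto.
  - exact (bD Hb _ _ (bN Hb _ (bD Hb _ _ (bN Hb _ H1) H2)) Hz2).
  - rewrite T_form, gA, gK3. unfold v. now rewrite gK4.
Qed.

Lemma S_top x1 y1 z : top add x1 b -> top add y1 b -> top add z b ->
  top add (Sigma add b x1 y1 z) b.
Proof.
  intros Hx Hy Hz w. destruct (S_decomp w Hx Hy Hz) as [A [B C]].
  do 2 eexists. split; [exact A|split; [exact B|split; [exact C|]]].
  intros m' n' Hm' Hn' Hw.
  apply (proj1 (Sigma_T _ _ Hx Hy)) in Hm'. destruct Hm' as [v' [Hv' Ev']].
  assert (Ev : v' = w <+> ! PP z w).
  { rewrite <- Ev', T_form, <- gA in Hw.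
    destruct (Pspec Hx v'), (Pspec Hy v').
    rewrite (Puniq Hz (m := v') (n := ! PP x1 v' <+> PP y1 v' <+> n') Hv' (bD Hb _ _ (bD Hb _ _ (bN Hb _ H0) H2) Hn') Hw).
    rewrite Hw at 1. now rewrite gK3. }
  subst v'. split; [now symmetry|].
  rewrite (gsolve_r Hw), (gsolve_r C), Ev'. reflexivity.
Qed.

Lemma S_T x0 x1 y1 z w : top add x0 b -> top add x1 b -> top add y1 b -> top add z b ->
  TT (Sigma add b x1 y1 z) x0 w = TT x1 y1 (TT z x0 w).
Proof.
  intros H0 Hx Hy Hz. destruct (S_decomp w Hx Hy Hz) as [A [B C]].
  unfold T at 1. rewrite (Puniq (S_top Hx Hy Hz) A B C).
  unfold T at 2. rewrite (Tshift _ Hx Hy (proj2 (Pspec H0 w))), T_form.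
  rewrite gopp_add, goppK, !gA. reflexivity.
Qed.

Lemma T_inj x0 x1 z : top add x0 b -> top add x1 b -> top add z b ->
  (forall w, TT z x0 w = TT x1 x0 w) -> forall w, z w <-> x1 w.
Proof.
  intros H0 Hx Hz E.
  assert (E' : forall w, PP z w = PP x1 w).
  { intro w. specialize (E w). unfold T in E.
    apply (f_equal (fun t => t <+> ! PP x0 w)) in E. rewrite !gK3 in E.
    apply gcanl in E. rewrite <- (goppK (PP z w)), E, goppK. reflexivity. }
  intro w. split; intro H.
  - destruct (Pspec Hx w) as [H1 _]. rewrite <- E', (Pin Hb Hz w H), gopp0, g0r in H1. exact H1.
  - destruct (Pspec Hz w) as [H1 _]. rewrite E', (Pin Hb Hx w H), gopp0, g0r in H1. exact H1.
Qed.
End Main.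

Lemma Sigmac_T a x y z w : is_subgroup add opp zero a -> top add a x -> top add a y ->
  (Sigmac add a x y z w <-> image (Tc add opp zero a x y) z w).
Proof.
  intros Ha Hx Hy. split.
  - intros [be [be' [Hbe [Hbe' [H1 [H2 H3]]]]]]. exists (be' <+> w). split; auto.
    unfold Tc.
    rewrite (Pcuniq Hx (m := be' <+> ! be) (n := be <+> w) (bD Ha _ _ Hbe' (bN Ha _ Hbe)) H1)
      by (rewrite <- gA, gK2; reflexivity).
    rewrite (Pcuniq Hy (m := ! be) (n := be <+> be' <+> w) (bN Ha _ Hbe) H2)
      by (rewrite <- (gA be be' w), gK2; reflexivity).
    rewrite gopp_add, goppK, (gA (! be) be), gNl, g0l, gK2. reflexivity.
  - intros [v [Hz <-]]. destruct (Pcspec Hx v) as [Hx1 Hx2].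
    destruct (Pcspec Hy v) as [Hy1 Hy2].
    set (mx := Pc add zero x a v) in *. set (my := Pc add zero y a v) in *.
    exists (! my), (mx <+> ! my). unfold Tc. fold mx my.
    assert (E : mx <+> ! my <+> (my <+> ! mx <+> v) = v).
    { rewrite <- (gA my), (gA (mx <+> ! my) my), gK4, gK1. reflexivity. }
    split; [exact (bN Ha _ Hy2)|split; [exact (bD Ha _ _ Hx2 (bN Ha _ Hy2))|]].
    split; [rewrite <- (gA my), gK2; exact Hx1|split; [|rewrite E; exact Hz]].
    rewrite <- (gA (! my)), E. exact Hy1.
Qed.
End Aux.

Theorem lemma6p5 (G : Type) (add : G -> G -> G) (opp : G -> G) (zero : G)
  (HG : is_group add opp zero) (a b x y : G -> Prop)
  (Ha : is_subgroup add opp zero a) (Hb : is_subgroup add opp zero b)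
  (Hxb : top add x b) (Hyb : top add y b)
  (Hax : top add a x) (Hay : top add a y) :
  (* main identities *)
  (forall z : G -> Prop,
     (forall w, Sigma add b x y z w <-> image (T add opp zero b x y) z w) /\
     (forall w, Sigmac add a x y z w <-> image (Tc add opp zero a x y) z w)) /\
  (* consequences *)
  (forall u : G -> Prop, top add u b ->
     (forall w, T add opp zero b x x w = w) /\
     (forall w, T add opp zero b x u (T add opp zero b u y w)
                = T add opp zero b x y w)) /\
  (forall x0 x1 y1 z : G -> Prop, top add x0 b -> top add x1 b ->
     top add y1 b -> top add z b ->
     top add (Sigma add b x1 y1 z) b /\
     (forall w, T add opp zero b (Sigma add b x1 y1 z) x0 w
                = T add opp zero b x1 y1 (T add opp zero b z x0 w)) /\
     (forall w, T add opp zero b x1 y1 w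
                = T add opp zero b (Sigma add b x1 y1 x0) x0 w) /\
     ((forall w, T add opp zero b z x0 w = T add opp zero b x1 x0 w) ->
        forall w, z w <-> x1 w)).
Proof.
  split; [|split].
  - intro z. split; intro w.
    + exact (Sigma_T HG Hb z w Hxb Hyb).
    + exact (Sigmac_T HG z w Ha Hax Hay).
  - intros u Hu. split; intro w.
    + apply T_id. exact HG.
    + exact (T_comp HG Hb w Hxb Hu Hyb).
  - intros x0 x1 y1 z H0 H1 H2 Hz. split; [|split; [|split]].
    + exact (S_top HG Hb H1 H2 Hz).
    + intro w. exact (S_T HG Hb w H0 H1 H2 Hz).
    + intro w. rewrite (S_T HG Hb w H0 H1 H2 H0), (T_id HG). reflexivity.
    + exact (T_inj HG Hb H0 H1 Hz).
Qed.
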